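(* Every ordered graph $G$ with at least one edge has an edge $e$ with $\mathrm{h}_G(e)\ge \overline{d}(G)/2$.
   Context: An ordered graph is a finite simple graph $G$ equipped with a total order $\le_G$ on $E(G)$ and a total order $\le^V_G$ on $V(G)$. Let $\mathbb N=\{1,2,\dots\}$. Define $\preceq_{\mathrm{lex}}$ on $\mathbb N\times V(G)$ by $(i,v)\preceq_{\mathrm{lex}}(i',v')$ iff $i<i'$, or $i=i'$ and $v\le^V_G v'$. The height table $\mathrm{HT}(G)$ is a partially filled array indexed by $\mathbb N\times V(G)$, built by going through all $(i,v)$ in $\preceq_{\mathrm{lex}}$-increasing order and setting the entry at $(i,v)$ to be the $\le_G$-largest edge containing $v$ not yet entered into the table (blank if none remain). Every edge is entered exactly once; $\mathrm{h}_G(e)$ denotes the row of $\mathrm{HT}(G)$ containing $e$. $\overline{d}(G)=2|E(G)|/|V(G)|$ is the average degree. *)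

(* Defs.v *)
From mathcomp Require Import all_boot all_order all_algebra.
Set Implicit Arguments. Unset Strict Implicit. Unset Printing Implicit Defensive.

(* An ordered graph: vertex set = all of the finType T, with vertex order leV;
   edge set E : {set {set T}} (each edge a 2-element set), with edge order leE. *)
Section HeightTable.
Variables (T : finType) (leV : rel T) (E : {set {set T}}) (leE : rel {set T}).

Definition vertex_seq : seq T := sort leV (enum T).

Definition top_edge (R : {set {set T}}) (v : T) : option {set T} :=
  [pick e in R | (v \in e) && [forall f in R, (v \in f) ==> leE f e]].

(* state: (edges not yet entered, row assigned to each entered edge) *)
Definition ht_state := ({set {set T}} * ({set T} -> nat))%type.

Definition ht_cell (i : nat) (st : ht_state) (v : T) : ht_state :=
  let: (R, h) := st in
  match top_edge R v with
  | Some e => (R :\ e, fun f => if f == e then i else h f)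
  | None => st
  end.

Definition ht_row (st : ht_state) (i : nat) : ht_state :=
  foldl (ht_cell i) st vertex_seq.

Definition ht_rows (n : nat) : ht_state :=
  foldl ht_row (E, fun _ => 0%N) (iota 1 n).

(* h_G(e): the row of HT(G) containing e.  Rows beyond #|E| are all blank,
   since every nonblank row enters at least one edge. *)
Definition height (e : {set T}) : nat := (ht_rows #|E|).2 e.

End HeightTable.

(* Main.v *)
Require Import Defs.
From mathcomp Require Import all_boot all_order all_algebra.
From mathcomp Require Import zify.
Import Order.TTheory GRing.Theory Num.Theory.

Lemma exists_max (X : finType) (r : rel X) (n : nat) (A : {set X}) :
  #|A| = n -> {in A &, total r} -> {in A & &, transitive r} -> A != set0 ->
  exists2 x, x \in A & forall y, y \in A -> r y x.
Proof.
elim: n A => [|n IH] A cA tot tr.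
  by move/eqP: cA; rewrite cards_eq0 => /eqP ->; rewrite eqxx.
case/set0Pn=> a aA.
have cA' : #|A :\ a| = n by move: cA; rewrite (cardsD1 a) aA; case.
have sub : A :\ a \subset A by apply: subsetDl.
case: (boolP (A :\ a == set0)) => [/eqP H0|ne].
  exists a => // y yA; case: (eqVneq y a) => [->|ya].
    by case/orP: (tot a a aA aA).
  have : y \in A :\ a by rewrite !inE ya.
  by rewrite H0 inE.
have [x xA' Hx] := IH (A :\ a) cA'
  (fun u v uA vA => tot u v (subsetP sub u uA) (subsetP sub v vA))
  (fun u v w uA vA wA => tr u v w (subsetP sub u uA) (subsetP sub v vA) (subsetP sub w wA)) ne.
have xA := subsetP sub x xA'.
case/orP: (tot a x aA xA) => [ax|xa].
  exists x => // y yA; case: (eqVneq y a) => [->//|ya].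
  by apply: Hx; rewrite !inE ya.
exists a => // y yA; case: (eqVneq y a) => [->|ya].
  by case/orP: (tot a a aA aA).
apply: (tr x) => //; first by apply: Hx; rewrite !inE ya.

Qed.

Section Proofs.
Variables (T : finType) (leV : rel T) (E : {set {set T}}) (leE : rel {set T}).
Hypothesis totE : {in E &, total leE}.
Hypothesis trE : {in E & &, transitive leE}.

Lemma top_edge_in (R : {set {set T}}) v e : top_edge leE R v = Some e -> e \in R.
Proof. by rewrite /top_edge; case: pickP => // x /andP[xR _] [<-]. Qed.

Lemma top_edge_some (R : {set {set T}}) v e : R \subset E -> e \in R -> v \in e ->
  exists f, top_edge leE R v = Some f.
Proof.
move=> RE eR ve.
set A := [set f in R | v \in f].
have AE : A \subset E by apply/subsetP=> f; rewrite inE => /andP[fR _]; exact: (subsetP RE).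
have nA : A != set0 by apply/set0Pn; exists e; rewrite inE eR ve.
have [m mA Hm] := @exists_max _ leE #|A| A erefl
  (fun u w uA wA => totE u w (subsetP AE u uA) (subsetP AE w wA))
  (fun u w z uA wA zA => trE u w z (subsetP AE u uA) (subsetP AE w wA) (subsetP AE z zA))
  nA.
rewrite /top_edge; case: pickP => [x _|H]; first by exists x.
move: (H m); rewrite inE in mA; case/andP: mA => mR vm.
rewrite mR vm /=; move/negbT/negP; case.
apply/forallP=> f; apply/implyP=> fR; apply/implyP=> vf.
by apply: Hm; rewrite inE fR vf.
Qed.

Lemma cell_spec i (R : {set {set T}}) h v : let st := ht_cell leE i (R,h) v in
  [/\ st.1 \subset R, #|R| <= (#|st.1|).+1 &
   forall f, st.2 f = if f \in R :\: st.1 then i else h f].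
Proof.
rewrite /ht_cell; case H: (top_edge leE R v) => [e|] /=.
  have eR := top_edge_in _ _ _ H.
  split; first exact: subsetDl.
    by rewrite (cardsD1 e R) eR.
  move=> f; have -> : (f \in R :\: (R :\ e)) = (f == e).
    rewrite !inE; case: (eqVneq f e) => [->|]; first by rewrite eR.
    by move=> _; case: (f \in R).
  by [].
split; [exact: subxx | exact: leqnSn | ].
by move=> f; rewrite setDv inE.
Qed.

Lemma cell_strict i (R : {set {set T}}) h v e : R \subset E -> e \in R -> v \in e ->
  #|(ht_cell leE i (R,h) v).1| < #|R|.
Proof.
move=> RE eR ve; have [f Hf] := top_edge_some R v e RE eR ve.
rewrite /ht_cell Hf /=.
by rewrite (cardsD1 f R) (top_edge_in _ _ _ Hf).
Qed.

Lemma row_spec i (s : seq T) : forall (R : {set {set T}}) (h : {set T} -> nat), let st := foldl (ht_cell leE i) (R,h) s in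
  [/\ st.1 \subset R, #|R| <= #|st.1| + size s &
   forall f, st.2 f = if f \in R :\: st.1 then i else h f].
Proof.
elim: s => [|x s IH] R h.
  by split; [exact: subxx | rewrite addn0 | move=> f; rewrite setDv inE].
rewrite (_ : foldl (ht_cell leE i) (R,h) (x::s) = foldl (ht_cell leE i) (ht_cell leE i (R,h) x) s) //.
have := cell_spec i R h x.
case: (ht_cell leE i (R, h) x) => R1 h1 /= [s1 c1 f1].
have [s2 c2 f2] := IH R1 h1.
set st := foldl _ _ _ in s2 c2 f2 *.
split.
- exact: subset_trans s2 s1.
- by rewrite addnS; apply: leq_trans c1 _; rewrite ltnS.
- move=> f; rewrite f2 f1 !inE.
  have q1 := subsetP s2 f; have q2 := subsetP s1 f.
  case Hs: (f \in st.1) q1; case H1: (f \in R1) q2; case Hr: (f \in R) => //= q2 q1.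
  all: by [have := q1 isT | have := q2 isT].
Qed.

Lemma row_strict i (s : seq T) v e : forall (R : {set {set T}}) (h : {set T} -> nat),
  R \subset E -> e \in R -> v \in e -> v \in s ->
  #|(foldl (ht_cell leE i) (R,h) s).1| < #|R|.
Proof.
elim: s => [|x s IH] R h RE eR ve //.
rewrite (_ : foldl (ht_cell leE i) (R,h) (x::s) = foldl (ht_cell leE i) (ht_cell leE i (R,h) x) s) //.
have := cell_spec i R h x.
case Ec: (ht_cell leE i (R, h) x) => [R1 h1] /= [s1 c1 f1].
have [s2 _ _] := row_spec i s R1 h1.
rewrite inE => /orP[/eqP vx|vs].
  subst x; apply: leq_ltn_trans (subset_leq_card s2) _.
  by have := cell_strict i R h v e RE eR ve; rewrite Ec.
case: (boolP (e \in R1)) => eR1.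
  apply: leq_trans (IH R1 h1 (subset_trans s1 RE) eR1 ve vs) _.
  exact: subset_leq_card.
apply: leq_ltn_trans (subset_leq_card s2) _.
apply: proper_card; apply/properP; split => //; by exists e.
Qed.

Lemma cell_empty i h v : ht_cell leE i (set0, h) v = (set0, h).
Proof.
rewrite /ht_cell /top_edge; case: pickP => // x /andP[]; by rewrite inE.
Qed.

Lemma row_empty i h : ht_row leV leE (set0, h) i = (set0, h).
Proof.
rewrite /ht_row; elim: (vertex_seq leV) => // x s IH.
by rewrite (_ : foldl (ht_cell leE i) (set0,h) (x::s) = foldl (ht_cell leE i) (ht_cell leE i (set0,h) x) s) // cell_empty.
Qed.

Lemma rowsS n : ht_rows leV E leE n.+1 = ht_row leV leE (ht_rows leV E leE n) n.+1.
Proof.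
rewrite /ht_rows (_ : iota 1 n.+1 = iota 1 n ++ [:: n.+1]) ?foldl_cat //.
by rewrite -(addn1 n) iotaD /= add1n addn1.
Qed.

Lemma size_vs : size (vertex_seq leV) = #|T|.
Proof. by rewrite /vertex_seq size_sort cardT. Qed.

Lemma mem_vs v : v \in vertex_seq leV.
Proof. by rewrite /vertex_seq mem_sort mem_enum. Qed.

End Proofs.

Local Open Scope ring_scope.

Theorem lemma3p5 (T : finType) (leV : rel T) (E : {set {set T}})
    (leE : rel {set T}) :
  (forall e, e \in E -> #|e| = 2%N) ->
  total leV -> transitive leV -> antisymmetric leV ->
  {in E &, total leE} -> {in E & &, transitive leE} ->
  {in E &, antisymmetric leE} ->
  E != set0 ->
  exists2 e, e \in E &
    ((2 * #|E|)%:R / #|T|%:R) / 2 <= (height leV E leE e)%:R :> rat.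
Proof.
move=> c2 _ _ _ totE trE _ En.
set S := ht_rows leV E leE.
have inv : forall n, [/\ (S n).1 \subset E, (#|E| <= #|(S n).1| + n * #|T|)%N &
    ((S n).1 == set0) || (#|(S n).1| + n <= #|E|)%N].
  elim=> [|n [IH1 IH2 IH3]].
    by rewrite /S /ht_rows /= subxx addn0 leqnn orbT.
  rewrite /S rowsS -/S.
  case: (S n) IH1 IH2 IH3 => R h /= IH1 IH2 IH3.
  have [s1 c1 _] := @row_spec _ leE n.+1 (vertex_seq leV) R h.
  rewrite size_vs in c1.
  split; first exact: subset_trans s1 IH1.
    by rewrite mulSn /ht_row addnA; apply: leq_trans IH2 _; rewrite leq_add2r.
  case: (boolP (R == set0)) => [/eqP R0|Rn].
    by rewrite /ht_row R0 -/(ht_row leV leE (set0, h) n.+1) row_empty eqxx.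
  rewrite (negbTE Rn) /= in IH3.
  case/set0Pn: Rn => e eR.
  have : (0 < #|e|)%N by rewrite c2 // (subsetP IH1).
  rewrite card_gt0 => /set0Pn [v ve].
  have := @row_strict _ _ _ totE trE n.+1 (vertex_seq leV) v e R h IH1 eR ve (@mem_vs _ leV v).
  rewrite /ht_row => lt; apply/orP; right.
  by rewrite addnS -addSn; apply: leq_trans _ IH3; rewrite leq_add2r.
have SN : (S #|E|).1 == set0.
  have [_ _ /orP[//|H]] := inv #|E|.
  by rewrite -cards_eq0 -leqn0 -(leq_add2r #|E|) add0n.
have exP : exists n, (S n).1 == set0 by exists #|E|.
case: (ex_minnP exP) => m Hm Hmin.
have mN : (m <= #|E|)%N := Hmin _ SN.
case: m Hm Hmin mN => [|k] Hm Hmin mN.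
  by move: Hm; rewrite /S /ht_rows /= (negbTE En).
have Sk : (S k).1 != set0.
  by apply/negP => /Hmin; rewrite ltnn.
have [Ek _ _] := inv k.
case/set0Pn: Sk => e eSk.
have Sstable : forall j, S (k.+1 + j)%N = S k.+1.
  elim=> [|j IH]; first by rewrite addn0.
  rewrite addnS /S rowsS -/S IH.
  by move/eqP: Hm; case: (S k.+1) => R h /= ->; rewrite row_empty.
have hm : (S k.+1).2 e = k.+1.
  move: Hm eSk; rewrite /S rowsS -/S.
  case: (S k) => R h /= Hm eR.
  have [_ _ f1] := @row_spec _ leE k.+1 (vertex_seq leV) R h.
  move: Hm; rewrite /ht_row f1 !inE eR andbT.
  by move/eqP => ->; rewrite inE.
exists e; first exact: (subsetP Ek).
have -> : height leV E leE e = k.+1.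
  by rewrite /height -/S -(subnKC mN) Sstable.
have [_ bnd _] := inv k.+1.
move/eqP: Hm => Hm; rewrite Hm cards0 add0n in bnd.
have T0 : (0 < #|T|)%N.
  have eE := subsetP Ek e eSk.
  by apply: leq_trans (max_card e); rewrite c2.
rewrite ler_pdivrMr // ler_pdivrMr ?ltr0n // -!natrM ler_nat.
lia.
Qed.
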